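(* For every $J$-unitary $T$ on ${\cal K}$, $$g(V(T))=g(T),\qquad g_{\mathrm{ess}}(V(T))=g_{\mathrm{ess}}(T),$$ and $$g(T)=g(T^* )=g(T^{-1}),\qquad g_{\mathrm{ess}}(T)=g_{\mathrm{ess}}(T^* )=g_{\mathrm{ess}}(T^{-1}).$$
   Context: ${\cal H}$ is a separable complex Hilbert space, ${\cal K}={\cal H}\oplus{\cal H}$, $J=\begin{pmatrix}{\bf 1}&0\\0&-{\bf 1}\end{pmatrix}$. A bounded invertible $T=\begin{pmatrix}a&b\\c&d\end{pmatrix}$ is $J$-unitary if $T^*JT=J$; $V(T)=\begin{pmatrix}(a^* )^{-1}&bd^{-1}\\-d^{-1}c&d^{-1}\end{pmatrix}$ (a unitary). For a bounded operator $A$ on a Hilbert space set $$g(A)=\min\sigma\Bigl(({\bf 1}+A^*A)^{-\frac12}({\bf 1}-A)^*({\bf 1}-A)({\bf 1}+A^*A)^{-\frac12}\Bigr)=\sup\{g\ge0:\ g({\bf 1}+A^*A)<(A-{\bf 1})^*(A-{\bf 1})\},$$ and let $g_{\mathrm{ess}}(A)$ be defined by the same supremum except that the operator inequality is only required to hold on some subspace of finite codimension. *)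

(* Defs.v *)
From HB Require Import structures.
From mathcomp Require Import all_boot all_order all_algebra.
From mathcomp Require Import complex.
From mathcomp Require Import boolp classical_sets reals constructive_ereal ereal.
From Stdlib Require Import ClassicalEpsilon.

Set Implicit Arguments.
Unset Strict Implicit.
Unset Printing Implicit Defensive.

Import Order.TTheory GRing.Theory Num.Theory.
Local Open Scope ring_scope.
Local Open Scope classical_set_scope.

Section Hilbert.
Variable R : realType.
Local Notation C := R[i].

Variable V : lmodType C.
Variable ip : V -> V -> C.

Definition nrm2 (x : V) : R := complex.Re (ip x x).
Definition nrm (x : V) : R := Num.sqrt (nrm2 x).

Definition is_inner_product : Prop :=
  [/\ (forall (a : C) (x y z : V), ip (a *: x + y) z = a * ip x z + ip y z),
      (forall x y : V, ip x y = (ip y x)^*),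
      (forall x : V, 0 <= ip x x) &
      (forall x : V, ip x x = 0 -> x = 0)].

Definition is_complete : Prop :=
  forall u : nat -> V,
    (forall e : R, 0 < e -> exists N : nat, forall m n : nat,
        (N <= m)%N -> (N <= n)%N -> nrm (u m - u n) < e) ->
    exists l : V, forall e : R, 0 < e -> exists N : nat, forall n : nat,
        (N <= n)%N -> nrm (u n - l) < e.

Definition is_separable : Prop :=
  exists d : nat -> V, forall (x : V) (e : R), 0 < e ->
    exists n : nat, nrm (x - d n) < e.

Definition is_sep_hilbert : Prop :=
  [/\ is_inner_product, is_complete & is_separable].

Definition is_linear_op (A : V -> V) : Prop :=
  forall (a : C) (x y : V), A (a *: x + y) = a *: A x + A y.

Definition is_bounded_op (A : V -> V) : Prop :=
  is_linear_op A /\ exists M : R, forall x : V, nrm (A x) <= M * nrm x.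

(* the adjoint A^* (chosen by classical choice; it exists and is unique for
   bounded A on a Hilbert space) *)
Definition adj (A : V -> V) : V -> V :=
  epsilon (inhabits (fun _ : V => 0))
    (fun B : V -> V => forall x y : V, ip (A x) y = ip x (B y)).

Definition is_inverse_op (A B : V -> V) : Prop :=
  is_bounded_op B /\ (forall x : V, B (A x) = x) /\ (forall x : V, A (B x) = x).

Definition invertible_op (A : V -> V) : Prop :=
  is_bounded_op A /\ exists B, is_inverse_op A B.

(* the inverse A^{-1} (chosen by classical choice; unique when it exists) *)
Definition inv_op (A : V -> V) : V -> V :=
  epsilon (inhabits (fun _ : V => 0)) (fun B : V -> V => is_inverse_op A B).

(* the operator inequality  g (1 + A^* A) <= (A - 1)^* (A - 1)  restricted to a
   set of vectors S, written out as quadratic forms: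
   g (|x|^2 + |Ax|^2) <= |Ax - x|^2 for x in S *)
Definition gineq_on (S : set V) (A : V -> V) (g : R) : Prop :=
  forall x : V, S x -> g * (nrm2 x + nrm2 (A x)) <= nrm2 (A x - x).

Definition gfun (A : V -> V) : \bar R :=
  ereal_sup [set (g%:E)%E | g in [set g : R | 0 <= g /\ gineq_on setT A g]].

(* closed subspaces of finite codimension are exactly the orthogonal
   complements of finite families of vectors *)
Definition orth_of (n : nat) (v : 'I_n -> V) : set V :=
  [set x : V | forall i : 'I_n, ip x (v i) = 0].

Definition gess (A : V -> V) : \bar R :=
  ereal_sup [set (g%:E)%E | g in [set g : R | 0 <= g /\
      exists (n : nat) (v : 'I_n -> V), gineq_on (orth_of v) A g]].

End Hilbert.

Section Krein.
Variable R : realType.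
Local Notation C := R[i].
Variable H : lmodType C.
Variable ip : H -> H -> C.

Definition ipK (p q : H * H) : C := ip p.1 q.1 + ip p.2 q.2.

Definition Jop (p : H * H) : H * H := (p.1, - p.2).

Definition blk_a (T : H * H -> H * H) (x : H) : H := (T (x, 0)).1.
Definition blk_b (T : H * H -> H * H) (y : H) : H := (T (0, y)).1.
Definition blk_c (T : H * H -> H * H) (x : H) : H := (T (x, 0)).2.
Definition blk_d (T : H * H -> H * H) (y : H) : H := (T (0, y)).2.

Definition J_unitary (T : H * H -> H * H) : Prop :=
  invertible_op ipK T /\ (forall p, adj ipK T (Jop (T p)) = Jop p).

Definition Vop (T : H * H -> H * H) (p : H * H) : H * H :=
  let a := blk_a T in let b := blk_b T in
  let c := blk_c T in let d := blk_d T in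
  let di := inv_op ip d in
  (inv_op ip (adj ip a) p.1 + b (di p.2), - di (c p.1) + di p.2).

End Krein.

(* Main.v *)
Require Import Defs.
From HB Require Import structures.
From mathcomp Require Import all_boot all_order all_algebra.
From mathcomp Require Import complex.
From mathcomp Require Import boolp classical_sets reals constructive_ereal ereal.
From Stdlib Require Import ClassicalEpsilon.
From mathcomp Require Import ring lra.

Set Implicit Arguments.
Unset Strict Implicit.
Unset Printing Implicit Defensive.
Import Order.TTheory GRing.Theory Num.Theory.
Local Open Scope ring_scope.
Section IP.
Variable R : realType.
Local Notation C := R[i].
Variable V : lmodType C.
Variable ip : V -> V -> C.
Hypothesis hip : is_inner_product ip.

Local Notation re := (@complex.Re R).
Local Notation im := (@complex.Im R).
Local Notation rc := (real_complex R).

Lemma ipL a x y z : ip (a *: x + y) z = a * ip x z + ip y z.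
Proof. by case: hip => h _ _ _; apply: h. Qed.
Lemma ipC x y : ip x y = (ip y x)^*.
Proof. by case: hip => _ h _ _; apply: h. Qed.
Lemma ip_ge0 x : 0 <= ip x x.
Proof. by case: hip => _ _ h _; apply: h. Qed.
Lemma ip_eq0 x : ip x x = 0 -> x = 0.
Proof. by case: hip => _ _ _ h; apply: h. Qed.

Lemma ipDl x y z : ip (x + y) z = ip x z + ip y z.
Proof. by rewrite -[x]scale1r ipL mul1r scale1r. Qed.
Lemma ip0l z : ip 0 z = 0.
Proof.
have := ipDl 0 0 z; rewrite addr0 => h.
by apply: (@addrI _ (ip 0 z)); rewrite addr0 -h.
Qed.
Lemma ipZl a x z : ip (a *: x) z = a * ip x z.
Proof. by rewrite -[a *: x]addr0 ipL ip0l addr0. Qed.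
Lemma ipNl x z : ip (- x) z = - ip x z.
Proof. by rewrite -scaleN1r ipZl mulN1r. Qed.
Lemma ipBl x y z : ip (x - y) z = ip x z - ip y z.
Proof. by rewrite ipDl ipNl. Qed.
Lemma ipDr x y z : ip x (y + z) = ip x y + ip x z.
Proof. by rewrite [LHS]ipC ipDl rmorphD [ip x y]ipC [ip x z]ipC. Qed.
Lemma ipZr a x z : ip x (a *: z) = a^* * ip x z.
Proof. by rewrite [LHS]ipC ipZl rmorphM [ip x z]ipC. Qed.
Lemma ip0r x : ip x 0 = 0.
Proof. by rewrite [LHS]ipC ip0l rmorph0. Qed.
Lemma ipNr x z : ip x (- z) = - ip x z.
Proof. by rewrite [LHS]ipC ipNl rmorphN [ip x z]ipC. Qed.
Lemma ipBr x y z : ip x (y - z) = ip x y - ip x z.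
Proof. by rewrite ipDr ipNr. Qed.

Lemma ip_ext u v : (forall x, ip x u = ip x v) -> u = v.
Proof.
move=> h; apply/eqP; rewrite -subr_eq0; apply/eqP; apply: ip_eq0.
by rewrite ipBr h subrr.
Qed.

Lemma reJ (z : C) : re (z^*) = re z.
Proof. by case: z. Qed.
Lemma reD (z w : C) : re (z + w) = re z + re w.
Proof. by case: z; case: w. Qed.
Lemma reN (z : C) : re (- z) = - re z.
Proof. by case: z. Qed.

Lemma ipxx x : ip x x = (rc (nrm2 ip x)).
Proof.
have := ip_ge0 x; rewrite lecE /= /nrm2.
case: (ip x x) => a b /= /andP[/eqP -> _]; by [].
Qed.
Lemma nrm2_ge0 x : 0 <= nrm2 ip x.
Proof. by have := ip_ge0 x; rewrite ipxx lecR. Qed.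
Lemma nrm2_eq0 x : nrm2 ip x = 0 -> x = 0.
Proof. by move=> h; apply: ip_eq0; rewrite ipxx h. Qed.
Lemma nrm2_0 : nrm2 ip 0 = 0.
Proof. by rewrite /nrm2 ip0l. Qed.

Lemma nrm2D x y : nrm2 ip (x + y) = nrm2 ip x + nrm2 ip y + re (ip x y) *+ 2.
Proof.
rewrite /nrm2 ipDl !ipDr [ip y x]ipC !reD reJ mulr2n; lra.
Qed.
Lemma nrm2N x : nrm2 ip (- x) = nrm2 ip x.
Proof. by rewrite /nrm2 ipNl ipNr opprK. Qed.
Lemma nrm2B x y : nrm2 ip (x - y) = nrm2 ip x + nrm2 ip y - re (ip x y) *+ 2.
Proof. by rewrite nrm2D nrm2N ipNr reN mulNrn. Qed.
Lemma nrm2_sym x y : nrm2 ip (x - y) = nrm2 ip (y - x).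
Proof. by rewrite -nrm2N opprB. Qed.

Lemma reM_real (t : R) (z : C) : re ((rc t) * z) = t * re z.
Proof. by case: z => a b /=; rewrite !mul0r subr0. Qed.
Lemma conj_real (t : R) : ((rc t))^* = (rc t) :> C.
Proof. by apply/eqP; rewrite eq_complex /= oppr0 !eqxx. Qed.

Lemma ipZlr x y (s t : R) : re (ip ((rc s) *: x) ((rc t) *: y)) = s * t * re (ip x y).
Proof. by rewrite ipZl ipZr conj_real mulrA -rmorphM reM_real mulrC. Qed.
Lemma nrm2Z (t : R) x : nrm2 ip ((rc t) *: x) = t ^+ 2 * nrm2 ip x.
Proof. by rewrite /nrm2 ipZlr expr2. Qed.

Lemma nrmE x : nrm ip x ^+ 2 = nrm2 ip x.
Proof. by rewrite /nrm sqr_sqrtr // nrm2_ge0. Qed.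
Lemma nrm_ge0 x : 0 <= nrm ip x.
Proof. by rewrite /nrm sqrtr_ge0. Qed.

Lemma cs x y : re (ip x y) <= nrm ip x * nrm ip y.
Proof.
set a := nrm ip x; set b := nrm ip y.
have ha : 0 <= a by apply: nrm_ge0.
have hb : 0 <= b by apply: nrm_ge0.
have Ea : a ^+ 2 = nrm2 ip x by apply: nrmE.
have Eb : b ^+ 2 = nrm2 ip y by apply: nrmE.
have := nrm2_ge0 ((rc b) *: x - (rc a) *: y).
rewrite nrm2B !nrm2Z ipZlr -Ea -Eb => h.
have [a0|apos] := eqVneq a 0.
  have : x = 0 by apply: nrm2_eq0; rewrite -Ea a0 expr0n.
  by move=> ->; rewrite ip0l /= a0 mul0r.
have [b0|bpos] := eqVneq b 0.
  have : y = 0 by apply: nrm2_eq0; rewrite -Eb b0 expr0n.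
  by move=> ->; rewrite ip0r /= b0 mulr0.
have hab : 0 < a * b by rewrite mulr_gt0 // lt0r ?apos ?bpos.
set r := re (ip x y) in h *.
rewrite mulr2n in h.
have : (a * b) * r <= (a * b) * (a * b) by nra.
by rewrite ler_pM2l.
Qed.

Lemma nrm_le x (c : R) : 0 <= c -> nrm2 ip x <= c ^+ 2 -> nrm ip x <= c.
Proof.
move=> hc h; rewrite -(@ler_pXn2r _ 2) // ?nnegrE ?nrm_ge0 //.
by rewrite nrmE.
Qed.
Lemma nrm_lt x (c : R) : 0 < c -> nrm2 ip x < c ^+ 2 -> nrm ip x < c.
Proof.
move=> hc h; rewrite -(@ltr_pXn2r _ 2) // ?nnegrE ?nrm_ge0 ?ltW //.
by rewrite nrmE.
Qed.
Lemma nrm_lt2 x (c : R) : 0 <= c -> nrm ip x < c -> nrm2 ip x < c ^+ 2.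
Proof.
move=> hc h; rewrite -nrmE ltr_pXn2r // ?nnegrE ?nrm_ge0 //.
Qed.

Lemma nrm_tri x y : nrm ip (x + y) <= nrm ip x + nrm ip y.
Proof.
apply: nrm_le; first by rewrite addr_ge0 ?nrm_ge0.
rewrite nrm2D -!nrmE; have := cs x y; have := nrm_ge0 x; have := nrm_ge0 y.
rewrite mulr2n; nra.
Qed.
Lemma nrmN x : nrm ip (- x) = nrm ip x.
Proof. by rewrite /nrm nrm2N. Qed.
Lemma nrm_sym x y : nrm ip (x - y) = nrm ip (y - x).
Proof. by rewrite /nrm nrm2_sym. Qed.
Lemma nrm_eq0 x : nrm ip x = 0 -> x = 0.
Proof. by move=> h; apply: nrm2_eq0; rewrite -nrmE h expr0n. Qed.
Lemma nrm_0 : nrm ip 0 = 0.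
Proof. by rewrite /nrm nrm2_0 sqrtr0. Qed.

End IP.
Section Proj.
Variable R : realType.
Local Notation C := R[i].
Variable V : lmodType C.
Variable ip : V -> V -> C.
Hypothesis hip : is_inner_product ip.
Hypothesis hc : is_complete ip.

Local Notation re := (@complex.Re R).
Local Notation im := (@complex.Im R).
Local Notation rc := (real_complex R).
Local Notation ipL := (ipL hip).
Local Notation ipC := (ipC hip).
Local Notation ipDl := (ipDl hip).
Local Notation ip0l := (ip0l hip).
Local Notation ipZl := (ipZl hip).
Local Notation ipNl := (ipNl hip).
Local Notation ipBl := (ipBl hip).
Local Notation ipDr := (ipDr hip).
Local Notation ipZr := (ipZr hip).
Local Notation ip0r := (ip0r hip).
Local Notation ipNr := (ipNr hip).
Local Notation ipBr := (ipBr hip).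
Local Notation ip_ext := (ip_ext hip).
Local Notation ip_eq0 := (ip_eq0 hip).
Local Notation ipxx := (ipxx hip).
Local Notation nrm2_ge0 := (nrm2_ge0 hip).
Local Notation nrm2_eq0 := (nrm2_eq0 hip).
Local Notation nrm2_0 := (nrm2_0 hip).
Local Notation nrm2D := (nrm2D hip).
Local Notation nrm2N := (nrm2N hip).
Local Notation nrm2B := (nrm2B hip).
Local Notation nrm2_sym := (nrm2_sym hip).
Local Notation ipZlr := (ipZlr hip).
Local Notation nrm2Z := (nrm2Z hip).
Local Notation nrmE := (nrmE hip).
Local Notation cs := (cs hip).
Local Notation nrm_le := (nrm_le hip).
Local Notation nrm_lt := (nrm_lt hip).
Local Notation nrm_lt2 := (nrm_lt2 hip).
Local Notation nrm_tri := (nrm_tri hip).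
Local Notation nrmN := (nrmN hip).
Local Notation nrm_sym := (nrm_sym hip).
Local Notation nrm_eq0 := (nrm_eq0 hip).
Local Notation nrm_0 := (nrm_0 hip).

Definition conv (u : nat -> V) (l : V) := forall e : R, 0 < e ->
  exists N : nat, forall n : nat, (N <= n)%N -> nrm ip (u n - l) < e.

Lemma reipZr x y (t : R) : re (ip x (rc t *: y)) = t * re (ip x y).
Proof. by rewrite ipZr conj_real reM_real. Qed.

Lemma reipi x y : re (ip x ('i *: y)) = im (ip x y).
Proof. by rewrite ipZr; case: (ip x y) => a b /=; ring. Qed.

Lemma small_inv (e : R) : 0 < e -> exists N : nat, forall n : nat, (N <= n)%N -> n.+1%:R^-1 < e.
Proof.
move=> he; exists (Num.Def.archi_bound e^-1) => n hn.
have h0 : 0 <= e^-1 by rewrite invr_ge0 ltW.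
have h1 := archi_boundP h0.
have h2 : (Num.Def.archi_bound e^-1)%:R <= n%:R :> R by rewrite ler_nat.
have h3 : n%:R < n.+1%:R :> R by rewrite ltr_nat.
rewrite invf_plt ?posrE ?ltr0Sn //.
by apply: lt_trans h3; apply: lt_le_trans h2.
Qed.

Lemma sq_le0_aux (q n : R) : 0 < n -> q^+2 * n <= 0 -> q^+2 <= 0.
Proof. nra. Qed.

Lemma perp z s : (forall t : R, nrm2 ip z <= nrm2 ip (z - rc t *: s)) -> re (ip z s) = 0.
Proof.
move=> h; have [->|sn0] := eqVneq s 0; first by rewrite ip0r.
have np : 0 < nrm2 ip s.
  rewrite lt0r nrm2_ge0 andbT; apply/eqP => /nrm2_eq0 hs; by rewrite hs eqxx in sn0.
set r := re (ip z s); set n := nrm2 ip s in np *.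
have := h (r / n); rewrite nrm2B nrm2Z reipZr -/r -/n => hh.
set q := r / n in hh.
have hr : r = q * n by rewrite /q divfK // gt_eqF.
rewrite hr in hh; rewrite mulr2n in hh.
clearbody q r n.
have : q ^+ 2 * n <= 0 by nra.
move=> hq; have hq2 : q ^+ 2 <= 0 by apply: sq_le0_aux np hq.
have : q = 0 by apply/eqP; rewrite -sqrf_eq0 eq_le hq2 sqr_ge0.
by move=> q0; rewrite hr q0 mul0r.
Qed.

Lemma ple_aux (A t r en eps d e : R) : 0 <= A -> 0 <= t -> r <= A * t ->
  A ^+ 2 < d + en -> t < eps -> en < e / 2%:R -> en <= 1 -> eps <= 1 ->
  eps * (2 * d + 5) <= e / 2 -> 0 < eps -> 0 <= d -> A ^+ 2 + t ^+ 2 + r *+ 2 <= d + e.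
Proof.
move=> hA0 ht0 hcs hsn hn2 hn1 hinv eps1 eps2 epos d0.
have hA : A <= d + 2 by nra.
have ht2 : t ^+ 2 <= eps by nra.
have hAt : A * t <= (d + 2) * eps by nra.
rewrite mulr2n; lra.
Qed.

Lemma vec_mid (y p q : V) :
  rc 2 *: (y - (rc 2^-1 *: p + rc 2^-1 *: q)) = (y - p) + (y - q).
Proof.
rewrite scalerBr scalerDr !scalerA -!rmorphM mulfV ?pnatr_eq0 // rmorph1 !scale1r.
by rewrite rmorph_nat scaler_nat mulr2n opprD addrACA.
Qed.

Lemma proj (S : V -> Prop) y : S 0 ->
  (forall (a b : C) u v, S u -> S v -> S (a *: u + b *: v)) ->
  (forall u l, (forall n, S (u n)) -> conv u l -> S l) -> ~ S y ->
  exists z, z <> 0 /\ forall s, S s -> ip s z = 0.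
Proof.
move=> S0 Slin Scl nSy.
pose D : set R := fun r => exists s, S s /\ r = nrm2 ip (y - s).
have Dlb : has_lbound D by exists 0 => r [s [_ ->]]; exact: nrm2_ge0.
have D0 : D (nrm2 ip (y - 0)) by exists 0.
have hinf : has_inf D by split => //; exists (nrm2 ip (y - 0)).
pose d := inf D.
have dle : forall s, S s -> d <= nrm2 ip (y - s).
  by move=> s Ss; apply: (ge_inf Dlb); exists s.
have d0 : 0 <= d.
  apply: lb_le_inf; first by exists (nrm2 ip (y - 0)).
  by move=> r [s [_ ->]]; exact: nrm2_ge0.
have hs : forall n : nat, exists s, S s /\ nrm2 ip (y - s) < d + n.+1%:R^-1.
  move=> n; have hn0 : 0 < n.+1%:R^-1 :> R by rewrite invr_gt0 ltr0Sn.
  have [r Dr hr] := @inf_adherent R D _ hn0 hinf.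
  by case: Dr => s [Ss er]; exists s; rewrite -er.
have [sq hsq] := boolp.choice hs.
have par : forall n m, nrm2 ip (sq n - sq m) <= (n.+1%:R^-1 + m.+1%:R^-1) *+ 2.
  move=> n m.
  pose mid := rc 2^-1 *: sq n + rc 2^-1 *: sq m.
  have Smid : S mid by apply: Slin; case: (hsq n); case: (hsq m).
  have e1 := nrm2D (y - sq n) (y - sq m).
  have e2 := nrm2B (y - sq n) (y - sq m).
  rewrite -vec_mid nrm2Z -/mid in e1.
  have e3 : y - sq n - (y - sq m) = sq m - sq n by rewrite opprB addrC addrA subrK.
  rewrite e3 nrm2_sym in e2.
  have := dle _ Smid; case: (hsq n) => _ hn; case: (hsq m) => _ hm.
  rewrite !mulr2n in e1 e2 *; move=> hd.
  move: e1 e2 hd hn hm; clear; set A := nrm2 ip (y - sq n); set B := nrm2 ip (y - sq m).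
  set P := nrm2 ip (sq n - sq m); set Y := nrm2 ip (y - mid).
  set r := complex.Re _; set en := n.+1%:R^-1; set em := m.+1%:R^-1.
  clearbody A B P Y r en em d; move=> e1 e2 hd hn hm.
  rewrite expr2 in e1. lra.
have cau : forall e : R, 0 < e -> exists N : nat, forall m n : nat,
    (N <= m)%N -> (N <= n)%N -> nrm ip (sq m - sq n) < e.
  move=> e he.
  have he4 : 0 < e ^+ 2 / 4 by apply: divr_gt0; [exact: exprn_gt0 | lra].
  have [N hN] := small_inv he4.
  exists N => m n hm hn; apply: nrm_lt => //.
  apply: le_lt_trans (par m n) _.
  have := hN _ hm; have := hN _ hn; rewrite mulr2n.
  set a := n.+1%:R^-1; set b := m.+1%:R^-1; set E := e ^+ 2.
  clearbody a b E; lra.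
have [p hp] := hc cau.
have Sp : S p by apply: (Scl sq) => // n; case: (hsq n).
have ple : nrm2 ip (y - p) <= d.
  apply/ler_addgt0Pr => e he.
  pose eps := Num.min 1 (e / (2 * (2 * d + 5))).
  have epos : 0 < eps by rewrite lt_min ltr01 /= divr_gt0 //; lra.
  have eps1 : eps <= 1 by rewrite ge_min lexx.
  have eps2 : eps * (2 * d + 5) <= e / 2.
    have : eps <= e / (2 * (2 * d + 5)) by rewrite ge_min lexx orbT.
    rewrite ler_pdivlMr; last by lra.
    by move=> hh; rewrite ler_pdivlMr //; lra.
  have [N1 hN1] := small_inv (divr_gt0 he (ltr0Sn R 1)).
  have [N2 hN2] := hp eps epos.
  pose n := maxn N1 N2.
  have hn1 := hN1 n (leq_maxl _ _).
  have hn2 := hN2 n (leq_maxr _ _).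
  have hinv : n.+1%:R^-1 <= 1 :> R by rewrite invf_le1 ?ler1n ?ltr0Sn.
  case: (hsq n) => _ hsn.
  have ev : y - p = (y - sq n) + (sq n - p) by rewrite addrA subrK.
  rewrite ev nrm2D.
  have hcs := cs (y - sq n) (sq n - p).
  have hA0 := nrm_ge0 ip (y - sq n); have ht0 := nrm_ge0 ip (sq n - p).
  rewrite -(nrmE (y - sq n)) in hsn *; rewrite -(nrmE (sq n - p)).
  exact: (ple_aux hA0 ht0 hcs hsn hn2 hn1 hinv eps1 eps2 epos d0).
pose z := y - p.
exists z; split.
  move=> z0; apply: nSy; suff -> : y = p by [].
  by apply/eqP; rewrite -subr_eq0 -/z z0.
move=> s Ss.
have hz : forall s, S s -> re (ip z s) = 0.
  move=> s' Ss'; apply: perp => t.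
  apply: le_trans ple _.
  have -> : z - rc t *: s' = y - (1 *: p + rc t *: s') by rewrite scale1r opprD addrA.
  by apply: dle; apply: Slin.
have h1 := hz s Ss.
have h2 : im (ip z s) = 0.
  rewrite -reipi; apply: hz.
  by rewrite -[_ *: s]addr0 -(scaler0 _ 0); apply: Slin.
rewrite ipC; move: h1 h2; case: (ip z s) => a b /= -> ->.
by apply/eqP; rewrite eq_complex /= oppr0 !eqxx.
Qed.

End Proj.
Section Adj.
Variable R : realType.
Local Notation C := R[i].
Variable V : lmodType C.
Variable ip : V -> V -> C.
Hypothesis hip : is_inner_product ip.
Hypothesis hc : is_complete ip.

Local Notation re := (@complex.Re R).
Local Notation im := (@complex.Im R).
Local Notation rc := (real_complex R).
Local Notation ipL := (ipL hip).
Local Notation ipC := (ipC hip).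
Local Notation ipDl := (ipDl hip).
Local Notation ip0l := (ip0l hip).
Local Notation ipZl := (ipZl hip).
Local Notation ipNl := (ipNl hip).
Local Notation ipBl := (ipBl hip).
Local Notation ipDr := (ipDr hip).
Local Notation ipZr := (ipZr hip).
Local Notation ip0r := (ip0r hip).
Local Notation ipNr := (ipNr hip).
Local Notation ipBr := (ipBr hip).
Local Notation ip_ext := (ip_ext hip).
Local Notation ip_eq0 := (ip_eq0 hip).
Local Notation ipxx := (ipxx hip).
Local Notation nrm2_ge0 := (nrm2_ge0 hip).
Local Notation nrm2_eq0 := (nrm2_eq0 hip).
Local Notation nrm2_0 := (nrm2_0 hip).
Local Notation nrm2D := (nrm2D hip).
Local Notation nrm2N := (nrm2N hip).
Local Notation nrm2B := (nrm2B hip).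
Local Notation nrm2_sym := (nrm2_sym hip).
Local Notation ipZlr := (ipZlr hip).
Local Notation nrm2Z := (nrm2Z hip).
Local Notation nrmE := (nrmE hip).
Local Notation cs := (cs hip).
Local Notation nrm_le := (nrm_le hip).
Local Notation nrm_lt := (nrm_lt hip).
Local Notation nrm_lt2 := (nrm_lt2 hip).
Local Notation nrm_tri := (nrm_tri hip).
Local Notation nrmN := (nrmN hip).
Local Notation nrm_sym := (nrm_sym hip).
Local Notation nrm_eq0 := (nrm_eq0 hip).
Local Notation nrm_0 := (nrm_0 hip).
Local Notation reipZr := (reipZr hip).
Local Notation reipi := (reipi hip).
Local Notation proj := (proj hip hc).

Definition linf (f : V -> C) := forall a x y, f (a *: x + y) = a * f x + f y.

Lemma linf0 f : linf f -> f 0 = 0.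
Proof.
move=> hf; have := hf 1 0 0; rewrite scale1r addr0 mul1r => h.
by apply: (@addrI _ (f 0)); rewrite addr0 -h.
Qed.
Lemma linfZ f a x : linf f -> f (a *: x) = a * f x.
Proof. by move=> hf; rewrite -[a *: x]addr0 hf linf0 // addr0. Qed.
Lemma linfB f x y : linf f -> f (x - y) = f x - f y.
Proof. by move=> hf; rewrite addrC -scaleN1r hf mulN1r addrC. Qed.

Lemma lin0 (A : V -> V) : is_linear_op A -> A 0 = 0.
Proof.
move=> hf; have := hf 1 0 0; rewrite !scale1r addr0 => h.
by apply: (@addrI _ (A 0)); rewrite addr0 -h.
Qed.
Lemma linZ (A : V -> V) a x : is_linear_op A -> A (a *: x) = a *: A x.
Proof. by move=> hf; rewrite -[a *: x]addr0 hf lin0 // addr0. Qed.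
Lemma linD (A : V -> V) x y : is_linear_op A -> A (x + y) = A x + A y.
Proof. by move=> hf; rewrite -[x]scale1r hf !scale1r. Qed.
Lemma linN (A : V -> V) x : is_linear_op A -> A (- x) = - A x.
Proof. by move=> hf; rewrite -scaleN1r linZ // scaleN1r. Qed.
Lemma linB (A : V -> V) x y : is_linear_op A -> A (x - y) = A x - A y.
Proof. by move=> hf; rewrite linD // linN. Qed.

Lemma riesz f : linf f -> (forall u l, (forall n, f (u n) = 0) -> conv ip u l -> f l = 0) ->
  exists w, forall x, f x = ip x w.
Proof.
move=> hf hcl.
case: (classic (forall x, f x = 0)) => [h0|].
  by exists 0 => x; rewrite h0 ip0r.
move/existsNP => [y fy].
have S0 : f 0 = 0 by apply: linf0.
have Slin : forall (a b : C) u v, f u = 0 -> f v = 0 -> f (a *: u + b *: v) = 0.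
  by move=> a b u v hu hv; rewrite hf linfZ // hu hv !mulr0 addr0.
have [z [z0 hz]] := proj (S := fun x => f x = 0) S0 Slin hcl fy.
have fz : f z != 0.
  apply/eqP => fz0; apply: z0; apply: ip_eq0; exact: hz z fz0.
have zz : ip z z != 0 by apply/eqP => /ip_eq0.
exists (((f z) / ip z z)^* *: z) => x.
rewrite ipZr conjCK.
have : ip (x - (f x / f z) *: z) z = 0.
  by apply: hz; rewrite linfB // linfZ // divfK // subrr.
rewrite ipBl ipZl => /eqP; rewrite subr_eq0 => /eqP ->.
by field; apply/andP; split.
Qed.

Lemma nrm2Zc c x : nrm2 ip (c *: x) = re (c * c^*) * nrm2 ip x.
Proof.
rewrite /nrm2 ipZl ipZr mulrA ipxx.
by case: (c * c^*) => a b /=; rewrite mulr0 subr0.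
Qed.

Lemma reM (a b : R) (w : C) : re (Complex a b * w) = a * re w - b * im w.
Proof. by case: w. Qed.

Lemma ker_closed f K : linf f -> (forall x, re (f x) <= K * nrm ip x) ->
  forall u l, (forall n, f (u n) = 0) -> conv ip u l -> f l = 0.
Proof.
move=> hf hK u l hu hul.
have hK' : forall x, re (f x) <= `|K| * nrm ip x.
  move=> x; apply: le_trans (hK x) _; apply: ler_wpM2r; first exact: nrm_ge0.
  exact: ler_norm.
have key : forall a b : R, a ^+ 2 + b ^+ 2 = 1 -> re (Complex a b * f l) <= 0.
  move=> a b hab; apply/ler_addgt0Pr => e he; rewrite add0r.
  have hK1 : 0 < `|K| + 1 by rewrite ltr_wpDl.
  have [N hN] := hul (e / (`|K| + 1)) (divr_gt0 he hK1).
  have hv : f (Complex a b *: (l - u N)) = Complex a b * f l.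
    by rewrite linfZ // linfB // hu subr0.
  have hn : nrm ip (Complex a b *: (l - u N)) = nrm ip (u N - l).
    rewrite /nrm nrm2Zc nrm2_sym.
    have -> : re (Complex a b * (Complex a b)^*) = 1.
      by rewrite /= -hab !expr2; ring.
    by rewrite mul1r.
  have := hK' (Complex a b *: (l - u N)); rewrite hv hn => h1.
  have h2 := hN N (leqnn N).
  apply: (le_trans h1).
  have h3 : `|K| * nrm ip (u N - l) <= `|K| * (e / (`|K| + 1)).
    by apply: ler_wpM2l; [exact: normr_ge0 | exact: ltW].
  apply: (le_trans h3).
  rewrite mulrA ler_pdivrMr // mulrDr mulr1; have := normr_ge0 K; nra.
have k1 : re (Complex 1 0 * f l) <= 0 by apply: key; rewrite expr1n expr0n addr0.
have k2 : re (Complex (-1) 0 * f l) <= 0 by apply: key; rewrite sqrrN expr1n expr0n addr0.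
have k3 : re (Complex 0 1 * f l) <= 0 by apply: key; rewrite expr1n expr0n add0r.
have k4 : re (Complex 0 (-1) * f l) <= 0 by apply: key; rewrite sqrrN expr1n expr0n add0r.
rewrite !reM in k1 k2 k3 k4.
move: k1 k2 k3 k4; case: (f l) => a b /= k1 k2 k3 k4.
have ha : a = 0 by lra.
have hb : b = 0 by lra.
by rewrite ha hb.
Qed.

Lemma adj_ex A : is_bounded_op ip A -> exists B, forall x y, ip (A x) y = ip x (B y).
Proof.
move=> [hl [M hM]].
suff : forall y, exists w, forall x, ip (A x) y = ip x w.
  by move/boolp.choice => [B hB]; exists B.
move=> y.
have hf : linf (fun x => ip (A x) y).
  by move=> a x z /=; rewrite hl ipL.
apply: riesz => //.
apply: (@ker_closed _ (`|M| * nrm ip y)) => // x.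
apply: le_trans (cs _ _) _.
rewrite mulrAC; apply: ler_wpM2r; first exact: nrm_ge0.
apply: le_trans (hM x) _; apply: ler_wpM2r; first exact: nrm_ge0.
exact: ler_norm.
Qed.

Lemma adj_spec A : is_bounded_op ip A -> forall x y, ip (A x) y = ip x (adj ip A y).
Proof.
move=> hA; rewrite /adj.
apply: (epsilon_spec (inhabits (fun _ : V => 0))
  (fun B : V -> V => forall x y : V, ip (A x) y = ip x (B y))).
exact: adj_ex.
Qed.

Lemma adj_spec' A : is_bounded_op ip A -> forall x y, ip (adj ip A y) x = ip y (A x).
Proof. by move=> hA x y; rewrite ipC -adj_spec // -ipC. Qed.

Lemma adj_lin A : is_bounded_op ip A -> is_linear_op (adj ip A).
Proof.
move=> hA a y z; apply: ip_ext => x.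
by rewrite -adj_spec // ipDr ipZr ipDr ipZr -!adj_spec.
Qed.

Lemma bnd_aux (n c m : R) : 0 <= n -> 0 <= c -> 0 <= m -> n ^+ 2 <= c * n * m -> n <= c * m.
Proof.
move=> hn hcc hm h.
have hcm : 0 <= c * m by apply: mulr_ge0.
nra.
Qed.

Lemma adj_bounded A : is_bounded_op ip A -> is_bounded_op ip (adj ip A).
Proof.
move=> hA; split; first exact: adj_lin.
case: (hA) => hl [M hM].
exists `|M| => y.
apply: bnd_aux; [exact: nrm_ge0 | exact: normr_ge0 | exact: nrm_ge0 |].
rewrite nrmE /nrm2 -adj_spec //.
apply: le_trans (cs _ _) _.
apply: ler_wpM2r; first exact: nrm_ge0.
apply: le_trans (hM _) _; apply: ler_wpM2r; first exact: nrm_ge0.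
exact: ler_norm.
Qed.

End Adj.
Section Inv.
Variable R : realType.
Local Notation C := R[i].
Variable V : lmodType C.
Variable ip : V -> V -> C.
Hypothesis hip : is_inner_product ip.
Hypothesis hc : is_complete ip.

Local Notation re := (@complex.Re R).
Local Notation im := (@complex.Im R).
Local Notation rc := (real_complex R).
Local Notation ipL := (ipL hip).
Local Notation ipC := (ipC hip).
Local Notation ipDl := (ipDl hip).
Local Notation ip0l := (ip0l hip).
Local Notation ipZl := (ipZl hip).
Local Notation ipNl := (ipNl hip).
Local Notation ipBl := (ipBl hip).
Local Notation ipDr := (ipDr hip).
Local Notation ipZr := (ipZr hip).
Local Notation ip0r := (ip0r hip).
Local Notation ipNr := (ipNr hip).
Local Notation ipBr := (ipBr hip).
Local Notation ip_ext := (ip_ext hip).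
Local Notation ip_eq0 := (ip_eq0 hip).
Local Notation ipxx := (ipxx hip).
Local Notation nrm2_ge0 := (nrm2_ge0 hip).
Local Notation nrm2_eq0 := (nrm2_eq0 hip).
Local Notation nrm2_0 := (nrm2_0 hip).
Local Notation nrm2D := (nrm2D hip).
Local Notation nrm2N := (nrm2N hip).
Local Notation nrm2B := (nrm2B hip).
Local Notation nrm2_sym := (nrm2_sym hip).
Local Notation ipZlr := (ipZlr hip).
Local Notation nrm2Z := (nrm2Z hip).
Local Notation nrmE := (nrmE hip).
Local Notation cs := (cs hip).
Local Notation nrm_le := (nrm_le hip).
Local Notation nrm_lt := (nrm_lt hip).
Local Notation nrm_lt2 := (nrm_lt2 hip).
Local Notation nrm_tri := (nrm_tri hip).
Local Notation nrmN := (nrmN hip).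
Local Notation nrm_sym := (nrm_sym hip).
Local Notation nrm_eq0 := (nrm_eq0 hip).
Local Notation nrm_0 := (nrm_0 hip).
Local Notation reipZr := (reipZr hip).
Local Notation reipi := (reipi hip).
Local Notation proj := (proj hip hc).

Lemma surj_aux (a b M e : R) : 0 <= M -> 0 < e -> a < e / 2 -> b < e / (2 * (M + 1)) ->
  a + M * b <= e.
Proof.
move=> hM he ha hb.
have hq : e / (2 * (M + 1)) * (2 * (M + 1)) = e.
  by rewrite divfK //; apply/eqP; nra.
have hq0 : 0 <= e / (2 * (M + 1)) by apply: divr_ge0; nra.
move: hb hq hq0; set q := e / (2 * (M + 1)); clearbody q => hb hq hq0.
have h1 : M * b <= M * q by apply: ler_wpM2l => //; exact: ltW.
nra.
Qed.

Lemma below_surj (A B : V -> V) : is_bounded_op ip A ->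
  (forall x, nrm ip x <= nrm ip (A x)) ->
  (forall x y, ip (A x) y = ip x (B y)) -> (forall y, B y = 0 -> y = 0) ->
  forall y, exists x, A x = y.
Proof.
move=> [hl [M hM]] hb hB hBi y.
case: (classic (exists x, A x = y)) => // ny; exfalso.
have hM' : forall x, nrm ip (A x) <= `|M| * nrm ip x.
  move=> x; apply: le_trans (hM x) _; apply: ler_wpM2r; first exact: nrm_ge0.
  exact: ler_norm.
have S0 : exists x, A x = 0 by exists 0; apply: lin0.
have Slin : forall (a b : C) u v, (exists x, A x = u) -> (exists x, A x = v) ->
    exists x, A x = a *: u + b *: v.
  move=> a b u v [x <-] [x' <-]; exists (a *: x + b *: x').
  by rewrite hl linZ.
have Scl : forall u l, (forall n, exists x, A x = u n) -> conv ip u l -> exists x, A x = l.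
  move=> u l hu hul.
  have [xs hxs] := boolp.choice hu.
  have cau : forall e : R, 0 < e -> exists N : nat, forall m n : nat,
      (N <= m)%N -> (N <= n)%N -> nrm ip (xs m - xs n) < e.
    move=> e he; have he2 : 0 < e / 2 by apply: divr_gt0 => //; lra.
    have [N hN] := hul _ he2; exists N => m n hm hn.
    apply: le_lt_trans (hb _) _; rewrite linB // !hxs.
    have -> : u m - u n = (u m - l) + (l - u n) by rewrite addrA subrK.
    apply: le_lt_trans (nrm_tri _ _) _.
    rewrite [nrm ip (l - u n)]nrm_sym.
    have := hN m hm; have := hN n hn; lra.
  have [x hx] := hc cau.
  exists x; apply/eqP; rewrite eq_sym -subr_eq0; apply/eqP; apply: nrm_eq0.
  apply/eqP; rewrite eq_le nrm_ge0 andbT; apply/ler_addgt0Pr => e he; rewrite add0r.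
  have he2 : 0 < e / 2 by apply: divr_gt0 => //; lra.
  have he3 : 0 < e / (2 * (`|M| + 1)).
    by apply: divr_gt0 => //; have := normr_ge0 M; nra.
  have [N1 hN1] := hul _ he2; have [N2 hN2] := hx _ he3.
  pose n := maxn N1 N2.
  have h1 := hN1 n (leq_maxl _ _); have h2 := hN2 n (leq_maxr _ _).
  have -> : l - A x = - (u n - l) + (A (xs n - x)) by rewrite (linB (xs n) x hl) hxs opprB addrA subrK.
  apply: le_trans (nrm_tri _ _) _; rewrite nrmN.
  apply: le_trans (lerD (lexx _) (hM' _)) _.
  by apply: surj_aux => //; exact: normr_ge0.
have [z [z0 hz]] := proj (S := fun v => exists x, A x = v) S0 Slin Scl ny.
apply: z0; apply: hBi; apply: ip_eq0.
by rewrite -hB; apply: hz; exists (B z).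
Qed.

Lemma inv_ex (A B : V -> V) : is_bounded_op ip A ->
  (forall x, nrm ip x <= nrm ip (A x)) ->
  (forall x y, ip (A x) y = ip x (B y)) -> (forall y, B y = 0 -> y = 0) ->
  exists Ai, is_inverse_op ip A Ai.
Proof.
move=> hA hb hB hBi.
have [Ai hAi] := boolp.choice (below_surj hA hb hB hBi).
case: hA => hl _.
have inj : forall x x', A x = A x' -> x = x'.
  move=> x x' h; apply/eqP; rewrite -subr_eq0; apply/eqP; apply: nrm_eq0.
  apply/eqP; rewrite eq_le nrm_ge0 andbT.
  by apply: le_trans (hb _) _; rewrite linB // h subrr nrm_0.
exists Ai; split; last split.
- split.
    by move=> a y z; apply: inj; rewrite hl !hAi.
  exists 1 => y; rewrite mul1r; apply: le_trans (hb _) _; by rewrite hAi.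
- by move=> x; apply: inj; rewrite hAi.
- exact: hAi.
Qed.

Lemma inv_op_spec (A : V -> V) : (exists B, is_inverse_op ip A B) -> is_inverse_op ip A (inv_op ip A).
Proof. exact: epsilon_spec. Qed.

Lemma inv_unique (A B B' : V -> V) : is_inverse_op ip A B -> is_inverse_op ip A B' -> B = B'.
Proof.
move=> [_ [h1 h2]] [_ [h1' h2']]; apply: boolp.funext => x.
by rewrite -{1}(h2' x) h1.
Qed.

End Inv.
Section Transport.
Variable R : realType.
Local Notation C := R[i].
Variable V : lmodType C.
Variable ip : V -> V -> C.

Lemma transport (A B phi psi phi' psi' : V -> V) :
  (forall u, phi (psi u) = u) -> (forall x, psi (phi x) = x) ->
  (forall x v, ip (phi x) v = ip x (phi' v)) -> (forall u v, ip (psi u) v = ip u (psi' v)) ->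
  (forall x, nrm2 ip x + nrm2 ip (A x) = nrm2 ip (phi x) + nrm2 ip (B (phi x))) ->
  (forall x, nrm2 ip (A x - x) = nrm2 ip (B (phi x) - phi x)) ->
  gfun ip A = gfun ip B /\ gess ip A = gess ip B.
Proof.
move=> e1 e2 a1 a2 n1 n2; split.
- rewrite /gfun; congr ereal_sup; congr image.
  apply/boolp.funext => g; apply/boolp.propext; split => -[g0 h]; split => // x _.
  + by have := h (psi x) I; rewrite n1 n2 e1.
  + by rewrite n1 n2; apply: h.
- rewrite /gess; congr ereal_sup; congr image.
  apply/boolp.funext => g; apply/boolp.propext; split => -[g0 [n [v h]]]; split => //.
  + exists n, (fun i => psi' (v i)) => x hx.
    have hx' : orth_of ip v (psi x) by move=> i; rewrite a2; apply: hx.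
    by have := h _ hx'; rewrite n1 n2 e1.
  + exists n, (fun i => phi' (v i)) => x hx.
    have hx' : orth_of ip v (phi x) by move=> i; rewrite a1; apply: hx.
    by rewrite n1 n2; apply: h.
Qed.

End Transport.
Section Krein2.
Variable R : realType.
Local Notation C := R[i].
Variable H : lmodType C.
Variable ip : H -> H -> C.
Hypothesis hip : is_inner_product ip.
Hypothesis hc : is_complete ip.

Local Notation K := (H * H)%type.
Local Notation ipk := (ipK ip).
Local Notation ipDl := (ipDl hip).
Local Notation ipDr := (ipDr hip).
Local Notation ipNl := (ipNl hip).
Local Notation ipNr := (ipNr hip).
Local Notation ipBl := (ipBl hip).
Local Notation ipBr := (ipBr hip).
Local Notation ip0l := (ip0l hip).
Local Notation ip0r := (ip0r hip).
Local Notation ipZl := (ipZl hip).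
Local Notation ipZr := (ipZr hip).
Local Notation ipC := (ipC hip).
Local Notation ip_ext := (ip_ext hip).
Local Notation nrm2_0 := (nrm2_0 hip).
Local Notation nrm2N := (nrm2N hip).
Local Notation nrm2_ge0 := (nrm2_ge0 hip).
Local Notation nrm2_eq0 := (nrm2_eq0 hip).
Local Notation nrm2_sym := (nrm2_sym hip).
Local Notation adj_spec := (adj_spec hip hc).
Local Notation adj_spec' := (adj_spec' hip hc).
Local Notation adj_lin := (adj_lin hip hc).
Local Notation adj_bounded := (adj_bounded hip hc).
Local Notation inv_ex := (inv_ex hip hc).

Lemma nrm2K (p : K) : nrm2 ipk p = nrm2 ip p.1 + nrm2 ip p.2.
Proof. by rewrite /nrm2 /ipK reD. Qed.

Lemma nrm_mono (V : lmodType C) (ip' : V -> V -> C) (x : V) (W : lmodType C) (ip'' : W -> W -> C) (y : W) :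
  nrm2 ip' x <= nrm2 ip'' y -> nrm ip' x <= nrm ip'' y.
Proof. by move=> h; rewrite /nrm; apply: ler_wsqrtr. Qed.

Lemma nrmK_fst (p : K) : nrm ip p.1 <= nrm ipk p.
Proof. by apply: nrm_mono; rewrite nrm2K lerDl nrm2_ge0. Qed.
Lemma nrmK_snd (p : K) : nrm ip p.2 <= nrm ipk p.
Proof. by apply: nrm_mono; rewrite nrm2K lerDr nrm2_ge0. Qed.
Lemma nrmK_l x : nrm ipk (x, 0) = nrm ip x.
Proof. by rewrite /nrm nrm2K /= nrm2_0 addr0. Qed.
Lemma nrmK_r y : nrm ipk (0, y) = nrm ip y.
Proof. by rewrite /nrm nrm2K /= nrm2_0 add0r. Qed.

Lemma comp_bounded (F : K -> K) (emb : H -> K) (pr : K -> H) :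
  is_bounded_op ipk F ->
  (forall a x y, emb (a *: x + y) = a *: emb x + emb y) ->
  (forall a p q, pr (a *: p + q) = a *: pr p + pr q) ->
  (forall x, nrm ipk (emb x) = nrm ip x) -> (forall p, nrm ip (pr p) <= nrm ipk p) ->
  is_bounded_op ip (fun x => pr (F (emb x))).
Proof.
move=> [hl [M hM]] he hp hne hnp; split.
  by move=> a x y /=; rewrite he hl hp.
exists M => x; apply: le_trans (hnp _) _; rewrite -hne; exact: hM.
Qed.

Lemma emb_l a (x y : H) : ((a *: x + y, 0) : K) = a *: (x, 0) + (y, 0).
Proof. by change ((a *: x + y, 0) = (a *: x + y, a *: (0:H) + 0) :> K); rewrite scaler0 addr0. Qed.
Lemma emb_r a (x y : H) : ((0, a *: x + y) : K) = a *: (0, x) + (0, y).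
Proof. by change ((0, a *: x + y) = (a *: (0:H) + 0, a *: x + y) :> K); rewrite scaler0 addr0. Qed.

Section Blocks.
Variable F : K -> K.
Hypothesis hF : is_bounded_op ipk F.

Lemma bnd_a : is_bounded_op ip (blk_a F).
Proof. by apply: (comp_bounded hF emb_l) => //; [exact: nrmK_l | exact: nrmK_fst]. Qed.
Lemma bnd_b : is_bounded_op ip (blk_b F).
Proof. by apply: (comp_bounded hF emb_r) => //; [exact: nrmK_r | exact: nrmK_fst]. Qed.
Lemma bnd_c : is_bounded_op ip (blk_c F).
Proof. by apply: (comp_bounded hF emb_l) => //; [exact: nrmK_l | exact: nrmK_snd]. Qed.
Lemma bnd_d : is_bounded_op ip (blk_d F).
Proof. by apply: (comp_bounded hF emb_r) => //; [exact: nrmK_r | exact: nrmK_snd]. Qed.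

Lemma decomp (p : K) : F p = (blk_a F p.1 + blk_b F p.2, blk_c F p.1 + blk_d F p.2).
Proof.
case: hF => hl _; case: p => x y /=.
have -> : ((x, y) : K) = (x, 0) + (0, y).
  by change ((x, y) = (x + 0, 0 + y) :> K); rewrite addr0 add0r.
by rewrite (linD _ _ hl) /blk_a /blk_b /blk_c /blk_d.
Qed.

Definition adjblk (q : K) : K :=
  (adj ip (blk_a F) q.1 + adj ip (blk_c F) q.2, adj ip (blk_b F) q.1 + adj ip (blk_d F) q.2).

Lemma adjblk_spec p q : ipk (F p) q = ipk p (adjblk q).
Proof.
rewrite decomp /ipK /adjblk /= !ipDl !ipDr.
rewrite (adj_spec bnd_a) (adj_spec bnd_b) (adj_spec bnd_c) (adj_spec bnd_d).
ring.
Qed.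

Lemma adjK_spec p q : ipk (F p) q = ipk p (adj ipk F q).
Proof.
move: p q; rewrite /adj.
apply: (epsilon_spec (inhabits (fun _ : K => 0))
  (fun B : K -> K => forall x y : K, ipk (F x) y = ipk x (B y))).
by exists adjblk; exact: adjblk_spec.
Qed.

Lemma adjK_eq q : adj ipk F q = adjblk q.
Proof.
have h : forall p, ipk p (adj ipk F q) = ipk p (adjblk q).
  by move=> p; rewrite -adjK_spec adjblk_spec.
case E : (adj ipk F q) => [u v]; case E' : (adjblk q) => [u' v'].
congr pair; apply: ip_ext => x.
- by have := h (x, 0); rewrite E E' /ipK /= !ip0l !addr0.
- by have := h (0, x); rewrite E E' /ipK /= !ip0l !add0r.
Qed.

End Blocks.

Lemma ipkJ p q : ipk (Jop p) q = ipk p (Jop q).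
Proof. by rewrite /ipK /Jop /= ipNl ipNr. Qed.
Lemma JJ (p : K) : Jop (Jop p) = p.
Proof. by case: p => x y; rewrite /Jop /= opprK. Qed.
Lemma nrm2J (p : K) : nrm2 ipk (Jop p) = nrm2 ipk p.
Proof. by rewrite !nrm2K /Jop /= nrm2N. Qed.
Lemma JB (p q : K) : Jop (p - q) = Jop p - Jop q.
Proof.
case: p => x y; case: q => x' y'.
change ((x - x', - (y - y')) = (x - x', - y - - y') :> K).
by congr pair; rewrite opprB opprK addrC.
Qed.

End Krein2.
Section Main.
Variable R : realType.
Local Notation C := R[i].
Variable H : lmodType C.
Variable ip : H -> H -> C.
Hypothesis hip : is_inner_product ip.
Hypothesis hc : is_complete ip.
Variable T : H * H -> H * H.
Hypothesis hT : J_unitary ip T.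

Local Notation K := (H * H)%type.
Local Notation ipk := (ipK ip).
Local Notation re := (@complex.Re R).
Local Notation ipDl := (ipDl hip).
Local Notation ipDr := (ipDr hip).
Local Notation ipNl := (ipNl hip).
Local Notation ipNr := (ipNr hip).
Local Notation ipBl := (ipBl hip).
Local Notation ipBr := (ipBr hip).
Local Notation ip0l := (ip0l hip).
Local Notation ip0r := (ip0r hip).
Local Notation ip_ext := (ip_ext hip).
Local Notation nrm2_0 := (nrm2_0 hip).
Local Notation nrm2N := (nrm2N hip).
Local Notation nrm2_ge0 := (nrm2_ge0 hip).
Local Notation nrm2_eq0 := (nrm2_eq0 hip).
Local Notation nrm2_sym := (nrm2_sym hip).
Local Notation adj_spec := (adj_spec hip hc).
Local Notation adj_spec' := (adj_spec' hip hc).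
Local Notation adj_lin := (adj_lin hip hc).
Local Notation adj_bounded := (adj_bounded hip hc).
Local Notation inv_ex := (inv_ex hip hc).
Local Notation adjK_spec := (adjK_spec hip hc).
Local Notation adjK_eq := (adjK_eq hip hc).

Lemma hTb : is_bounded_op ipk T.
Proof. by case: hT => [[]]. Qed.

Definition Ti := inv_op ipk T.

Lemma Ti_inv : is_inverse_op ipk T Ti.
Proof. by case: hT => [[_ [B hB]] _]; apply: inv_op_spec; exists B. Qed.
Lemma TiT p : Ti (T p) = p. Proof. by case: Ti_inv => _ [h _]; apply: h. Qed.
Lemma TTi p : T (Ti p) = p. Proof. by case: Ti_inv => _ [_ h]; apply: h. Qed.
Lemma Ti_b : is_bounded_op ipk Ti. Proof. by case: Ti_inv. Qed.

Lemma adjT_eq : adj ipk T = fun z => Jop (Ti (Jop z)).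
Proof.
apply: boolp.funext => z; case: hT => _ hJ.
by have := hJ (Ti (Jop z)); rewrite TTi JJ.
Qed.

Lemma pres p q : ipk (T p) (Jop (T q)) = ipk p (Jop q).
Proof. by rewrite (adjK_spec hTb); case: hT => _ ->. Qed.
Lemma presTi p q : ipk (Ti p) (Jop (Ti q)) = ipk p (Jop q).
Proof. by rewrite -pres !TTi. Qed.

Lemma reJform (p : K) : re (ipk p (Jop p)) = nrm2 ip p.1 - nrm2 ip p.2.
Proof. by rewrite /ipK /Jop /= ipNr reD reN. Qed.

Lemma presN p : nrm2 ip (T p).1 - nrm2 ip (T p).2 = nrm2 ip p.1 - nrm2 ip p.2.
Proof. by rewrite -!reJform pres. Qed.
Lemma presTiN p : nrm2 ip (Ti p).1 - nrm2 ip (Ti p).2 = nrm2 ip p.1 - nrm2 ip p.2.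
Proof. by rewrite -!reJform presTi. Qed.

Local Notation a := (blk_a T).
Local Notation b := (blk_b T).
Local Notation c := (blk_c T).
Local Notation d := (blk_d T).
Local Notation as_ := (adj ip (blk_a T)).
Local Notation bs := (adj ip (blk_b T)).
Local Notation cs := (adj ip (blk_c T)).
Local Notation ds := (adj ip (blk_d T)).

Lemma ba : is_bounded_op ip a. Proof. exact (bnd_a hip hTb). Qed.
Lemma bb : is_bounded_op ip b. Proof. exact (bnd_b hip hTb). Qed.
Lemma bc : is_bounded_op ip c. Proof. exact (bnd_c hip hTb). Qed.
Lemma bd : is_bounded_op ip d. Proof. exact (bnd_d hip hTb). Qed.

Lemma F1 x x' : ip (a x) (a x') - ip (c x) (c x') = ip x x'.
Proof.
have := pres (x, 0) (x', 0); rewrite /ipK /Jop /= ipNr ip0l addr0 /blk_a /blk_c.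
by move=> <-.
Qed.
Lemma F2 x y : ip (a x) (b y) = ip (c x) (d y).
Proof.
have := pres (x, 0) (0, y); rewrite /ipK /Jop /= ipNr ip0l ip0r addr0 /blk_a /blk_b /blk_c /blk_d.
by move/eqP; rewrite subr_eq0 => /eqP.
Qed.

Lemma nd y : nrm2 ip (d y) = nrm2 ip y + nrm2 ip (b y).
Proof. have := presN (0, y); rewrite /= nrm2_0 /blk_b /blk_d; lra. Qed.
Lemma na x : nrm2 ip (a x) = nrm2 ip x + nrm2 ip (c x).
Proof. have := presN (x, 0); rewrite /= nrm2_0 /blk_a /blk_c; lra. Qed.

Lemma Ti_G w : Ti w = Jop (adj ipk T (Jop w)).
Proof. by rewrite adjT_eq /= !JJ. Qed.

Lemma Ti_r y : Ti (0, y) = (- cs y, ds y).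
Proof.
rewrite Ti_G (adjK_eq hTb) /adjblk /Jop /=.
rewrite !(lin0 (adj_lin ba)) !(lin0 (adj_lin bb)) !add0r.
by rewrite (linN _ (adj_lin bc)) (linN _ (adj_lin bd)) opprK.
Qed.
Lemma Ti_l y : Ti (y, 0) = (as_ y, - bs y).
Proof.
rewrite Ti_G (adjK_eq hTb) /adjblk /Jop /= oppr0.
by rewrite (lin0 (adj_lin bc)) (lin0 (adj_lin bd)) !addr0.
Qed.

Lemma nds y : nrm2 ip (ds y) = nrm2 ip y + nrm2 ip (cs y).
Proof. have := presTiN (0, y); rewrite Ti_r /= nrm2_0 nrm2N; lra. Qed.
Lemma nas y : nrm2 ip (as_ y) = nrm2 ip y + nrm2 ip (bs y).
Proof. have := presTiN (y, 0); rewrite Ti_l /= nrm2_0 nrm2N; lra. Qed.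

Lemma zero_of_le (x z : H) : nrm2 ip z = nrm2 ip x + nrm2 ip (0 : H) * 0 -> True.
Proof. by []. Qed.

Lemma eq0_of (x y : H) (w : H) : nrm2 ip y = nrm2 ip x + nrm2 ip w -> y = 0 -> x = 0.
Proof.
move=> h y0; apply: nrm2_eq0; move: h; rewrite y0 nrm2_0.
have := nrm2_ge0 x; have := nrm2_ge0 w; lra.
Qed.

Lemma le_of (x y w : H) : nrm2 ip y = nrm2 ip x + nrm2 ip w -> nrm ip x <= nrm ip y.
Proof. by move=> h; apply: nrm_mono; rewrite h lerDl nrm2_ge0. Qed.

Definition di := inv_op ip d.
Definition ai := inv_op ip as_.

Lemma di_inv : is_inverse_op ip d di.
Proof.
apply: inv_op_spec; apply: (inv_ex bd (B := ds)).
- by move=> y; apply: le_of (nd y).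
- exact: adj_spec bd.
- by move=> y; apply: eq0_of (nds y).
Qed.
Lemma ai_inv : is_inverse_op ip as_ ai.
Proof.
apply: inv_op_spec; apply: (inv_ex (adj_bounded ba) (B := a)).
- by move=> y; apply: le_of (nas y).
- by move=> x y; exact (adj_spec' ba y x).
- by move=> y; apply: eq0_of (na y).
Qed.

Lemma d_di y : d (di y) = y. Proof. by case: di_inv => _ [_ h]; apply: h. Qed.
Lemma di_d y : di (d y) = y. Proof. by case: di_inv => _ [h _]; apply: h. Qed.
Lemma di_lin : is_linear_op di. Proof. by case: di_inv => [[]]. Qed.
Lemma di_b : is_bounded_op ip di. Proof. by case: di_inv. Qed.

Lemma ai_eq x : ai x = a x - b (di (c x)).
Proof.
have hw : as_ (a x - b (di (c x))) = x.
  apply: ip_ext => z; rewrite -(adj_spec ba) ipBr F2 d_di.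
  exact: F1.
by rewrite -{1}hw; case: ai_inv => _ [-> _].
Qed.

Definition phi (p : K) : K := (p.1, (T p).2).
Definition psi (u : K) : K := (u.1, di (u.2 - c u.1)).

Lemma linb : is_linear_op b. Proof. by case: bb. Qed.
Lemma linc : is_linear_op c. Proof. by case: bc. Qed.
Lemma lind : is_linear_op d. Proof. by case: bd. Qed.

Lemma phi_psi u : phi (psi u) = u.
Proof.
case: u => u1 u2; rewrite /phi /psi (decomp hTb) /= d_di.
by rewrite addrC subrK.
Qed.
Lemma psi_phi p : psi (phi p) = p.
Proof.
case: p => p1 p2; rewrite /phi /psi (decomp hTb) /=.
by rewrite addrAC subrr add0r di_d.
Qed.

Lemma Vop_phi p : Vop ip T (phi p) = ((T p).1, p.2).
Proof.
case: p => p1 p2; rewrite /Vop /phi /= (decomp hTb) /= -/di -/ai.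
rewrite (linD _ _ di_lin) di_d ai_eq (linD _ _ linb).
by rewrite addrA subrK addKr.
Qed.

Definition phi' (v : K) : K := (v.1 + cs v.2, ds v.2).
Definition psi' (v : K) : K := (v.1 - cs (adj ip di v.2), adj ip di v.2).

Lemma phi_adj p v : ipk (phi p) v = ipk p (phi' v).
Proof.
case: p => p1 p2; rewrite /phi /phi' /ipK (decomp hTb) /= ipDl ipDr.
rewrite (adj_spec bc) (adj_spec bd); ring.
Qed.
Lemma psi_adj u v : ipk (psi u) v = ipk u (psi' v).
Proof.
case: u => u1 u2; rewrite /psi /psi' /ipK /= (adj_spec di_b) ipBl ipBr.
rewrite (adj_spec bc); ring.
Qed.

Lemma fst_sub (p q : K) : (p - q).1 = p.1 - q.1. Proof. by []. Qed.
Lemma snd_sub (p q : K) : (p - q).2 = p.2 - q.2. Proof. by []. Qed.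

Lemma main_res :
  gfun ipk (Vop ip T) = gfun ipk T /\
  gess ipk (Vop ip T) = gess ipk T /\
  gfun ipk T = gfun ipk (adj ipk T) /\
  gfun ipk (adj ipk T) = gfun ipk (inv_op ipk T) /\
  gess ipk T = gess ipk (adj ipk T) /\
  gess ipk (adj ipk T) = gess ipk (inv_op ipk T).
Proof.
have [g1 e1] : gfun ipk T = gfun ipk (Vop ip T) /\ gess ipk T = gess ipk (Vop ip T).
  apply: (transport phi_psi psi_phi phi_adj psi_adj) => p.
    by rewrite Vop_phi !nrm2K /phi /=; lra.
  rewrite Vop_phi !nrm2K !fst_sub !snd_sub /phi /=.
  by rewrite [nrm2 ip (p.2 - _)]nrm2_sym.
have [g2 e2] : gfun ipk T = gfun ipk Ti /\ gess ipk T = gess ipk Ti.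
  apply: (transport TTi TiT (adjK_spec hTb) (adjK_spec Ti_b)) => p.
    by rewrite TiT addrC.
  by rewrite TiT !nrm2K !fst_sub !snd_sub (nrm2_sym (T p).1) (nrm2_sym (T p).2).
have [g3 e3] : gfun ipk Ti = gfun ipk (fun z => Jop (Ti (Jop z))) /\
               gess ipk Ti = gess ipk (fun z => Jop (Ti (Jop z))).
  apply: (transport (@JJ _ _) (@JJ _ _) (ipkJ hip) (ipkJ hip)) => p.
    by rewrite JJ !(nrm2J hip).
  by rewrite JJ -JB (nrm2J hip).
rewrite adjT_eq -/Ti.
by rewrite -g1 -e1 -g2 -e2 -g3 -e3.
Qed.

End Main.

Theorem proposition4p5 (R : realType) (H : lmodType R[i]) (ip : H -> H -> R[i])
  (hH : is_sep_hilbert ip) (T : H * H -> H * H) (hT : J_unitary ip T) :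
  (gfun (ipK ip) (Vop ip T) = gfun (ipK ip) T /\
      gess (ipK ip) (Vop ip T) = gess (ipK ip) T /\
      gfun (ipK ip) T = gfun (ipK ip) (adj (ipK ip) T) /\
      gfun (ipK ip) (adj (ipK ip) T) = gfun (ipK ip) (inv_op (ipK ip) T) /\
      gess (ipK ip) T = gess (ipK ip) (adj (ipK ip) T) /\
      gess (ipK ip) (adj (ipK ip) T) = gess (ipK ip) (inv_op (ipK ip) T)).
Proof.
case: hH => hip hc _.
exact (main_res hip hc hT).
Qed.
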